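(* Let $n\ge1$, $\delta_1\in[0,1)$, $\delta_2\ge0$, and assume $n\ge2$, or $n=1$ and $\delta_1\in[0,1/2)$. Then there is $\lambda>0$ such that \[ \int_{[-1,1]^n}\Big(|x|^{2\delta_1}|\nabla\psi(x)|^2+(\pi/2)^2|x|^{2\delta_2}\psi(x)^2\Big)dx\ \ge\ \lambda\int_{[-1,1]^n}\psi(x)^2\,dx \] for all $\psi\in C_c^1(\mathbb R^n)$.
   Context: $|x|$ denotes the Euclidean norm of $x\in\mathbb R^n$. *)

(* Defs.v *)
From Stdlib Require Import Reals Lra.
Open Scope R_scope.

(* Points of R^n are encoded as x : nat -> R whose coordinates i >= n vanish. *)
Definition in_Rn (n : nat) (x : nat -> R) : Prop := forall i, (n <= i)%nat -> x i = 0.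

Fixpoint sumN (N : nat) (f : nat -> R) : R :=
  match N with O => 0 | S k => sumN k f + f k end.

Definition normn (n : nat) (x : nat -> R) : R := sqrt (sumN n (fun i => x i ^ 2)).

Definition upd (x : nat -> R) (m : nat) (t : R) : nat -> R :=
  fun i => if Nat.eqb i m then t else x i.

(* r^a for r >= 0, a >= 0, with the convention 0^0 = 1, 0^a = 0 for a > 0 *)
Definition rpow (r a : R) : R :=
  if Req_EM_T r 0 then (if Req_EM_T a 0 then 1 else 0) else Rpower r a.

(* psi in C_c^1(R^n) with gradient Dpsi (Dpsi x i = i-th partial derivative at x) *)
Definition C1c (n : nat) (psi : (nat -> R) -> R) (Dpsi : (nat -> R) -> nat -> R) : Prop :=
  (forall x, in_Rn n x -> forall i, (i < n)%nat ->
      derivable_pt_lim (fun t => psi (upd x i t)) (x i) (Dpsi x i)) /\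
  (forall x, in_Rn n x -> forall i, (i < n)%nat -> forall eps, 0 < eps ->
      exists d, 0 < d /\ forall y, in_Rn n y ->
        normn n (fun j => y j - x j) < d -> Rabs (Dpsi y i - Dpsi x i) < eps) /\
  (exists M, forall x, in_Rn n x -> M < normn n x -> psi x = 0).

(* midpoint of the k-th of N equal subintervals of [-1,1] *)
Definition mid (N k : nat) : R := -1 + (2 * INR k + 1) / INR N.

(* sum of g over the midpoints of the uniform grid with N^m cells in coordinates 0..m-1 *)
Fixpoint gridsum (m N : nat) (g : (nat -> R) -> R) : R :=
  match m with
  | O => g (fun _ => 0)
  | S m' => sumN N (fun k => gridsum m' N (fun x => g (upd x m' (mid N k))))
  end.

(* cube_int n g l : the (Riemann) integral of g over [-1,1]^n equals l,
   as the limit of midpoint Riemann sums on uniform grids. *)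
Definition cube_int (n : nat) (g : (nat -> R) -> R) (l : R) : Prop :=
  Un_cv (fun N => (2 / INR (S N)) ^ n * gridsum n (S N) g) l.

(* Main.v *)
Require Import Defs.
From Stdlib Require Import Reals.
From Stdlib Require Import Lra Lia Classical ClassicalEpsilon FunctionalExtensionality.
From Coquelicot Require Import Compactness.
Open Scope R_scope.


Lemma sumN_ext (N : nat) (f g : nat -> R) :
  (forall k, (k < N)%nat -> f k = g k) -> sumN N f = sumN N g.
Proof. induction N; intros H; simpl; auto. rewrite IHN by (intros; apply H; lia). rewrite H by lia. auto. Qed.

Lemma sumN_le (N : nat) (f g : nat -> R) :
  (forall k, (k < N)%nat -> f k <= g k) -> sumN N f <= sumN N g.
Proof. induction N; intros H; simpl; [lra|]. assert (sumN N f <= sumN N g) by (apply IHN; intros; apply H; lia). assert (f N <= g N) by (apply H; lia). lra. Qed.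

Lemma sumN_plus (N : nat) (f g : nat -> R) :
  sumN N (fun k => f k + g k) = sumN N f + sumN N g.
Proof. induction N; simpl; [lra|]. rewrite IHN. lra. Qed.

Lemma sumN_scal (N : nat) (a : R) (f : nat -> R) :
  sumN N (fun k => a * f k) = a * sumN N f.
Proof. induction N; simpl; [lra|]. rewrite IHN. lra. Qed.

Lemma sumN_const (N : nat) (c : R) : sumN N (fun _ => c) = INR N * c.
Proof. induction N; simpl sumN; [simpl; lra|]. rewrite IHN, S_INR. lra. Qed.

Lemma sumN_tele (m : nat) (u : nat -> R) : sumN m (fun k => u (S k) - u k) = u m - u O.
Proof. induction m; simpl; [lra|]. rewrite IHm. lra. Qed.

Lemma sumN_nonneg (N : nat) (f : nat -> R) : (forall k, (k < N)%nat -> 0 <= f k) -> 0 <= sumN N f.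
Proof. intros H. replace 0 with (sumN N (fun _ => 0)). apply sumN_le; auto. rewrite sumN_const; lra. Qed.

Lemma sumN_pair_ge (m : nat) (a : nat -> R) : (1 <= m)%nat -> (forall k, (k <= m)%nat -> 0 <= a k) ->
  sumN (S m) a <= sumN m (fun k => a k + a (S k)).
Proof. induction m; intros Hm H; [lia|]. destruct m.
 - simpl. lra.
 - change (sumN (S (S m)) a + a (S (S m)) <= sumN (S m) (fun k => a k + a (S k)) + (a (S m) + a (S (S m)))).
   assert (sumN (S (S m)) a <= sumN (S m) (fun k => a k + a (S k))) by (apply IHm; [lia| intros; apply H; lia]).
   assert (0 <= a (S m)) by (apply H; lia). lra.
Qed.

Lemma sumN_pair_eq (m : nat) (a : nat -> R) :
  sumN m (fun k => a k + a (S k)) + a O + a m = 2 * sumN (S m) a.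
Proof. induction m; simpl sumN; [simpl; lra|]. simpl sumN in IHm. lra. Qed.

Lemma sumN_pair_le (m : nat) (a : nat -> R) : (forall k, (k <= m)%nat -> 0 <= a k) ->
  sumN m (fun k => a k + a (S k)) <= 2 * sumN (S m) a.
Proof. intros H. rewrite <- sumN_pair_eq. assert (0 <= a O) by (apply H; lia). assert (0 <= a m) by (apply H; lia). lra. Qed.

Definition zig (c0 u : R) : R :=
  if Rle_dec u (-(c0/2)) then -c0 - u else if Rle_dec u (c0/2) then u else c0 - u.

Lemma zig_abs c0 u : 0 <= c0 -> Rabs (zig c0 u) <= Rabs u.
Proof. intros. unfold zig; destruct (Rle_dec u (-(c0/2))); [|destruct (Rle_dec u (c0/2))];
 unfold Rabs; repeat destruct Rcase_abs; lra. Qed.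

Lemma zig_lip c0 u v : 0 <= c0 -> u <= v -> zig c0 v - zig c0 u >= -(v - u).
Proof. intros. unfold zig; destruct (Rle_dec u (-(c0/2))); destruct (Rle_dec v (-(c0/2)));
 try destruct (Rle_dec u (c0/2)); try destruct (Rle_dec v (c0/2)); lra. Qed.

Lemma zig_mid c0 u v : Rabs u <= c0/2 -> Rabs v <= c0/2 -> zig c0 v - zig c0 u = v - u.
Proof. intros Hu Hv. unfold Rabs in *; repeat destruct Rcase_abs in *; unfold zig;
 destruct (Rle_dec u (-(c0/2))); destruct (Rle_dec v (-(c0/2)));
 try destruct (Rle_dec u (c0/2)); try destruct (Rle_dec v (c0/2)); lra. Qed.


Lemma mid_S N k : (N <> 0)%nat -> mid N (S k) = mid N k + 2 / INR N.
Proof. intros. unfold mid. rewrite S_INR. assert (INR N <> 0) by (apply not_0_INR; auto). field; auto. Qed.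

Lemma mid_bounds N k : (k < N)%nat -> -1 + 1 / INR N <= mid N k <= 1 - 1 / INR N.
Proof. intros H. unfold mid. assert (HN : 0 < INR N) by (apply lt_0_INR; lia).
  assert (Hk : INR k + 1 <= INR N) by (rewrite <- S_INR; apply le_INR; lia).
  assert (0 <= INR k) by apply pos_INR.
  assert (E : 1 - 1 / INR N = -1 + (2 * INR N - 1) / INR N) by (field; lra).
  rewrite E. unfold Rdiv. assert (0 < / INR N) by (apply Rinv_0_lt_compat; auto).
  split; apply Rplus_le_compat_l; apply Rmult_le_compat_r; lra.
Qed.

Lemma mid_first m : mid (S m) O = -(1 - 1 / INR (S m)).
Proof. unfold mid. simpl INR at 1. assert (INR (S m) <> 0) by (apply not_0_INR; auto). field; auto. Qed.

Lemma mid_last m : mid (S m) m = 1 - 1 / INR (S m).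
Proof. unfold mid. rewrite S_INR. assert (INR m + 1 <> 0) by (generalize (pos_INR m); lra). field; auto. Qed.


Lemma sq_le_abs a b : Rabs a <= Rabs b -> a ^ 2 <= b ^ 2.
Proof. intros H. rewrite <- (pow2_abs a), <- (pow2_abs b). simpl. rewrite !Rmult_1_r.
  apply Rmult_le_compat; auto; apply Rabs_pos. Qed.

Lemma term_bound (h K om D M Sk Sk1 Qk Qk1 Pk Pk1 Pj A B e gj tj : R) :
  0 < h -> 0 <= K -> 0 <= Sk -> 0 <= Sk1 -> 0 <= Qk -> 0 <= Qk1 ->
  0 <= Pk -> 0 <= Pk1 ->
  D >= -h -> (D <> h -> Sk <= K * Qk) -> (D <> h -> Sk1 <= K * Qk1) ->
  Pj <= Pk + Pk1 -> Pj = tj ^ 2 * gj ^ 2 -> M ^ 2 <= tj ^ 2 -> tj ^ 2 <= 1 ->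
  e ^ 2 <= om ^ 2 -> A = M * (gj + e) -> B ^ 2 <= 2 * (Sk + Sk1) ->
  D * (Sk + Sk1) / 2 + h * (A * B) >=
  h * (3/8) * (Sk + Sk1) + (- (h * K)) * (Qk + Qk1) + (- (8 * h)) * (Pk + Pk1) + (- (8 * h * om ^ 2)).
Proof.
  intros Hh HK HS HS1 HQ HQ1 HP HP1 HD H1 H2 HPj HPj' HM Htj He HA HB.
  assert (P1 : D * (Sk + Sk1) / 2 >= h / 2 * (Sk + Sk1) - h * K * (Qk + Qk1)).
  { destruct (Req_dec D h) as [E|E].
    - subst D. assert (0 <= h * K * (Qk + Qk1)) by (apply Rmult_le_pos; [apply Rmult_le_pos|]; lra). lra.
    - specialize (H1 E). specialize (H2 E).
      assert (h * (Sk + Sk1) <= h * K * (Qk + Qk1)).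
      { rewrite Rmult_assoc. apply Rmult_le_compat_l; lra. }
      assert (D * (Sk + Sk1) >= - h * (Sk + Sk1)).
      { apply Rle_ge. apply Rmult_le_compat_r; lra. }
      lra. }
  assert (P2 : A * B >= - (4 * A ^ 2 + B ^ 2 / 16)) by (assert (0 <= (2 * A + B / 4) ^ 2) by apply pow2_ge_0; lra).
  assert (P3 : A ^ 2 <= 2 * Pj + 2 * om ^ 2).
  { rewrite HA, HPj'. assert ((gj + e) ^ 2 <= 2 * gj ^ 2 + 2 * e ^ 2) by (assert (0 <= (gj - e) ^ 2) by apply pow2_ge_0; lra).
    assert (0 <= M ^ 2) by apply pow2_ge_0. assert (0 <= (gj+e) ^ 2) by apply pow2_ge_0. assert (0 <= e ^ 2) by apply pow2_ge_0.  assert (0 <= gj ^ 2) by apply pow2_ge_0. assert (0 <= tj ^ 2) by apply pow2_ge_0.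
    assert (M ^ 2 * (gj + e) ^ 2 <= tj ^ 2 * (2 * gj ^ 2 + 2 * e ^ 2)).
    { apply Rmult_le_compat; lra. }
    assert (tj ^ 2 * e ^ 2 <= 1 * om ^ 2).
    { apply Rmult_le_compat; lra. }
    replace ((M * (gj + e)) ^ 2) with (M ^ 2 * (gj + e) ^ 2) by ring. nra. }
  assert (P4 : 4 * A ^ 2 + B ^ 2 / 16 <= 8 * (Pk + Pk1) + 8 * om ^ 2 + (Sk + Sk1) / 8) by lra.
  assert (P5 : h * (A * B) >= - (h * (8 * (Pk + Pk1) + 8 * om ^ 2 + (Sk + Sk1) / 8))).
  { assert (h * (4 * A ^ 2 + B ^ 2 / 16) <= h * (8 * (Pk + Pk1) + 8 * om ^ 2 + (Sk + Sk1) / 8))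
      by (apply Rmult_le_compat_l; lra).
    assert (h * (A * B) >= h * (- (4 * A ^ 2 + B ^ 2 / 16))) by (apply Rle_ge, Rmult_le_compat_l; lra).
    lra. }
  lra.
Qed.

Lemma disc_ineq (m : nat) (f g kap : nat -> R) (om K : R) :
  (15 <= m)%nat -> 0 <= K ->
  (forall k, (k <= m)%nat -> 0 <= kap k) ->
  (forall k, (k <= m)%nat -> 1/4 <= Rabs (mid (S m) k) -> 1 <= K * kap k) ->
  (forall k, (k < m)%nat -> exists e j, Rabs e <= om /\ (j = k \/ j = S k) /\
      Rabs (mid (S m) k) <= Rabs (mid (S m) j) /\ Rabs (mid (S m) (S k)) <= Rabs (mid (S m) j) /\
      f (S k) - f k = 2 / INR (S m) * (g j + e)) ->
  sumN (S m) (fun k => f k ^ 2) <= 64 * sumN (S m) (fun k => mid (S m) k ^ 2 * g k ^ 2)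
     + 8 * K * sumN (S m) (fun k => kap k * f k ^ 2) + 32 * INR (S m) * om ^ 2.
Proof.
  intros Hm HK Hkap HKk Hinc.
  set (N := S m). set (h := 2 / INR N). set (c0 := 1 - 1 / INR N). set (t := mid N).
  assert (HN : 16 <= INR N) by (replace 16 with (INR 16) by (simpl; lra); apply le_INR; unfold N; lia).
  assert (Hh : 0 < h) by (unfold h; apply Rdiv_lt_0_compat; lra).
  assert (Hh8 : h <= 1/8).
  { unfold h. apply Rmult_le_reg_r with (INR N); [lra|]. unfold Rdiv. rewrite Rmult_assoc, Rinv_l by lra. lra. }
  assert (H1N : 1 / INR N <= 1/16).
  { apply Rmult_le_reg_r with (INR N); [lra|]. unfold Rdiv. rewrite Rmult_assoc, Rinv_l by lra. lra. }
  assert (H1N' : 0 < 1 / INR N) by (apply Rdiv_lt_0_compat; lra).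
  assert (Hc0 : 15/16 <= c0) by (unfold c0; lra). assert (Hc1 : c0 <= 1) by (unfold c0; lra).
  assert (Ht : forall k, (k <= m)%nat -> Rabs (t k) <= c0).
  { intros k Hk. destruct (mid_bounds N k) as [A B]; [unfold N; lia|]. unfold t, c0. unfold Rabs; destruct Rcase_abs; lra. }
  assert (HtS : forall k, t (S k) = t k + h) by (intros; unfold t, h; apply mid_S; unfold N; lia).
  set (Fz := fun k => zig c0 (t k)).
  set (S_ := fun k => f k ^ 2). set (P := fun k => t k ^ 2 * g k ^ 2). set (Q := fun k => kap k * f k ^ 2).
  assert (Hterm : forall k, (k < m)%nat -> Fz (S k) * S_ (S k) - Fz k * S_ k >=
     h * (3/8) * (S_ k + S_ (S k)) + (- (h * K)) * (Q k + Q (S k)) + (- (8 * h)) * (P k + P (S k)) + (- (8 * h * om ^ 2))).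
  { intros k Hk. destruct (Hinc k Hk) as (e & j & He & Hj & Hj1 & Hj2 & Hf). change (2 / INR (S m)) with h in Hf. change (mid (S m)) with t in Hj1, Hj2.
    assert (Htk := Ht k ltac:(lia)). assert (Htk1 := Ht (S k) ltac:(lia)).
    assert (Htj : Rabs (t j) <= c0) by (apply Ht; lia).
    set (D := Fz (S k) - Fz k). set (M := (Fz k + Fz (S k)) / 2).
    assert (E : Fz (S k) * S_ (S k) - Fz k * S_ k = D * (S_ k + S_ (S k)) / 2 + h * ((M * (g j + e)) * (f k + f (S k)))).
    { unfold D, M, S_. assert (Hf' : f (S k) = f k + h * (g j + e)) by lra. rewrite Hf'. field. }
    rewrite E.
    assert (HD : D >= -h).
    { unfold D, Fz. rewrite HtS. apply Rle_ge. generalize (zig_lip c0 (t k) (t k + h) ltac:(lra) ltac:(lra)). lra. }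
    assert (Hin : (Rabs (t k) < 1/4 \/ Rabs (t (S k)) < 1/4) -> D = h).
    { intros Hor. unfold D, Fz. rewrite HtS. rewrite zig_mid; [ring| |];
      rewrite HtS in Hor; revert Hor; unfold Rabs; repeat destruct Rcase_abs; lra. }
    apply term_bound with (Pj := P j) (tj := t j) (M := M) (e := e) (gj := g j); auto.
    - unfold S_; apply pow2_ge_0.
    - unfold S_; apply pow2_ge_0.
    - unfold Q; apply Rmult_le_pos; [apply Hkap; lia| apply pow2_ge_0].
    - unfold Q; apply Rmult_le_pos; [apply Hkap; lia| apply pow2_ge_0].
    - unfold P; apply Rmult_le_pos; apply pow2_ge_0.
    - unfold P; apply Rmult_le_pos; apply pow2_ge_0.
    - intros HDh. destruct (Rlt_dec (Rabs (t k)) (1/4)) as [l|l]; [exfalso; apply HDh; apply Hin; auto|].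
      unfold S_, Q. specialize (HKk k ltac:(lia) ltac:(change (mid (S m) k) with (t k); lra)).
      replace (K * (kap k * f k ^ 2)) with ((K * kap k) * f k ^ 2) by ring.
      assert (0 <= f k ^ 2) by apply pow2_ge_0. nra.
    - intros HDh. destruct (Rlt_dec (Rabs (t (S k))) (1/4)) as [l|l]; [exfalso; apply HDh; apply Hin; auto|].
      unfold S_, Q. specialize (HKk (S k) ltac:(lia) ltac:(change (mid (S m) (S k)) with (t (S k)); lra)).
      replace (K * (kap (S k) * f (S k) ^ 2)) with ((K * kap (S k)) * f (S k) ^ 2) by ring.
      assert (0 <= f (S k) ^ 2) by apply pow2_ge_0. nra.
    - assert (0 <= P k) by (unfold P; apply Rmult_le_pos; apply pow2_ge_0).
      assert (0 <= P (S k)) by (unfold P; apply Rmult_le_pos; apply pow2_ge_0).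
      destruct Hj; subst j; lra.
    - unfold M. assert (Rabs (Fz k) <= Rabs (t k)) by (apply zig_abs; lra).
      assert (Rabs (Fz (S k)) <= Rabs (t (S k))) by (apply zig_abs; lra).
      assert (Rabs ((Fz k + Fz (S k)) / 2) <= Rabs (t j)).
      { unfold Rdiv. rewrite Rabs_mult. rewrite (Rabs_right (/2)) by lra.
        generalize (Rabs_triang (Fz k) (Fz (S k))). lra. }
      apply sq_le_abs; auto.
    - replace 1 with (1 ^ 2) by ring. apply sq_le_abs. rewrite (Rabs_R1). lra.
    - apply sq_le_abs. assert (0 <= Rabs e) by apply Rabs_pos. rewrite (Rabs_right om) by lra. lra.
    - unfold S_. assert (0 <= (f k - f (S k)) ^ 2) by apply pow2_ge_0. nra. }
  assert (Hz : sumN m (fun k => Fz (S k) * S_ (S k) - Fz k * S_ k) = 0).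
  { rewrite (sumN_tele m (fun k => Fz k * S_ k)).
    assert (Fz m = 0).
    { unfold Fz, t, N. rewrite mid_last. fold N. fold c0. unfold zig.
      destruct (Rle_dec c0 (-(c0/2))); [lra|]. destruct (Rle_dec c0 (c0/2)); lra. }
    assert (Fz O = 0).
    { unfold Fz, t, N. rewrite mid_first. fold N. fold c0. unfold zig.
      destruct (Rle_dec (-c0) (-(c0/2))); lra. }
    rewrite H, H0. ring. }
  assert (Hge := sumN_le m _ _ (fun k Hk => Rge_le _ _ (Hterm k Hk))).
  rewrite Hz in Hge. rewrite !sumN_plus, !sumN_scal, sumN_const in Hge.
  assert (HA2 := sumN_pair_ge m S_ ltac:(lia) (fun k _ => pow2_ge_0 (f k))).
  assert (HQ0 : forall k, (k <= m)%nat -> 0 <= Q k).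
  { intros k Hk. unfold Q. apply Rmult_le_pos; [apply Hkap; auto| apply pow2_ge_0]. }
  assert (HP0 : forall k, (k <= m)%nat -> 0 <= P k).
  { intros k Hk. unfold P. apply Rmult_le_pos; apply pow2_ge_0. }
  assert (HQ2 := sumN_pair_le m Q HQ0). assert (HP2 := sumN_pair_le m P HP0).
  assert (HSQ : 0 <= sumN (S m) Q) by (apply sumN_nonneg; intros; apply HQ0; lia).
  assert (HSP : 0 <= sumN (S m) P) by (apply sumN_nonneg; intros; apply HP0; lia).
  assert (Hmn : INR m <= INR N) by (apply le_INR; unfold N; lia).
  assert (Hom : 0 <= om ^ 2) by apply pow2_ge_0.
  set (A2 := sumN m (fun k => S_ k + S_ (S k))) in *.
  set (Q2 := sumN m (fun k => Q k + Q (S k))) in *.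
  set (P2 := sumN m (fun k => P k + P (S k))) in *.
  assert (Hbr : h * (3/8 * A2 - K * Q2 - 8 * P2 - 8 * om ^ 2 * INR m) <= 0) by lra.
  assert (Hbr' : 3/8 * A2 - K * Q2 - 8 * P2 - 8 * om ^ 2 * INR m <= 0).
  { destruct (Rle_dec (3/8 * A2 - K * Q2 - 8 * P2 - 8 * om ^ 2 * INR m) 0); auto.
    exfalso. assert (0 < h * (3/8 * A2 - K * Q2 - 8 * P2 - 8 * om ^ 2 * INR m)) by (apply Rmult_lt_0_compat; lra). lra. }
  assert (K * Q2 <= K * (2 * sumN (S m) Q)) by (apply Rmult_le_compat_l; auto).
  assert (om ^ 2 * INR m <= om ^ 2 * INR N) by (apply Rmult_le_compat_l; auto).
  assert (0 <= K * sumN (S m) Q) by (apply Rmult_le_pos; auto).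
  assert (0 <= om ^ 2 * INR N) by (apply Rmult_le_pos; lra).
  change (sumN (S m) S_ <= 64 * sumN (S m) P + 8 * K * sumN (S m) Q + 32 * INR N * om ^ 2).
  lra.
Qed.

Definition cube (n : nat) (x : nat -> R) : Prop :=
  in_Rn n x /\ forall i, (i < n)%nat -> -1 <= x i <= 1.

Fixpoint toT (n : nat) (x : nat -> R) : Tn n R :=
  match n with O => tt | S m => (x O, toT m (fun i => x (S i))) end.

Fixpoint ofT (n : nat) : Tn n R -> nat -> R :=
  match n with
  | O => fun _ _ => 0
  | S m => fun t i => match i with O => fst t | S i' => ofT m (snd t) i' end
  end.

Fixpoint cstT (n : nat) (c : R) : Tn n R :=
  match n with O => tt | S m => (c, cstT m c) end.

Lemma ofT_Rn n t : in_Rn n (ofT n t).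
Proof. induction n; intros i Hi; simpl. auto. destruct i; [lia|]. apply IHn. lia. Qed.

Lemma ofT_bounded n t : bounded_n n (cstT n (-1)) (cstT n 1) t -> forall i, (i < n)%nat -> -1 <= ofT n t i <= 1.
Proof. induction n; intros H i Hi; [lia|]. destruct t as [t1 t2]. simpl in H. destruct H as [H1 H2].
  destruct i; simpl; auto. apply IHn; auto. lia. Qed.

Lemma toT_bounded n x : (forall i, (i < n)%nat -> -1 <= x i <= 1) -> bounded_n n (cstT n (-1)) (cstT n 1) (toT n x).
Proof. revert x; induction n; intros x H; simpl; auto. split. apply H; lia. apply IHn. intros; apply H; lia. Qed.

Lemma toT_close n d x t : close_n n d (toT n x) t -> forall i, (i < n)%nat -> Rabs (x i - ofT n t i) < d.
Proof. revert x; induction n; intros x H i Hi; [lia|]. destruct t as [t1 t2]. simpl in H. destruct H as [H1 H2].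
  destruct i; simpl; auto. apply (IHn t2 (fun i => x (S i))); auto. lia. Qed.

Lemma heine (n : nat) (u : (nat -> R) -> R) :
  (forall z, cube n z -> forall eps, 0 < eps -> exists del, 0 < del /\ forall y, cube n y ->
      (forall i, (i < n)%nat -> Rabs (y i - z i) < del) -> Rabs (u y - u z) < eps) ->
  forall eps, 0 < eps -> exists d, 0 < d /\ forall x y, cube n x -> cube n y ->
      (forall i, (i < n)%nat -> Rabs (y i - x i) < d) -> Rabs (u y - u x) < eps.
Proof.
  intros Hc eps Heps.
  assert (Hg : forall t : Tn n R, exists del, 0 < del /\ (cube n (ofT n t) -> forall y, cube n y ->
      (forall i, (i < n)%nat -> Rabs (y i - ofT n t i) < del) -> Rabs (u y - u (ofT n t)) < eps / 2)).
  { intros t. destruct (classic (cube n (ofT n t))) as [C|C].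
    - destruct (Hc _ C (eps/2) ltac:(lra)) as [del [Hd Hd']]. exists del; split; auto.
    - exists 1. split; [lra|]. intros; contradiction. }
  set (gd := fun t => proj1_sig (constructive_indefinite_description _ (Hg t))).
  assert (Hgd : forall t, 0 < gd t /\ (cube n (ofT n t) -> forall y, cube n y ->
      (forall i, (i < n)%nat -> Rabs (y i - ofT n t i) < gd t) -> Rabs (u y - u (ofT n t)) < eps / 2)).
  { intros t. unfold gd. destruct (constructive_indefinite_description _ (Hg t)). simpl. auto. }
  set (delta := fun t => mkposreal (gd t / 2) ltac:(destruct (Hgd t); lra)).
  destruct (compactness_value n (cstT n (-1)) (cstT n 1) delta) as [d Hd].
  exists d. split; [apply cond_pos|]. intros x y Hx Hy Hxy.
  apply NNPP. intros Hn. apply (Hd (toT n x)). { apply toT_bounded. apply Hx. }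
  intros [t [Hbt [Hct Hdt]]]. apply Hn.
  assert (Hz : cube n (ofT n t)) by (split; [apply ofT_Rn| apply ofT_bounded; auto]).
  destruct (Hgd t) as [Hp Hq]. simpl in Hdt.
  assert (Hxz : forall i, (i < n)%nat -> Rabs (x i - ofT n t i) < gd t / 2) by (apply toT_close; auto).
  assert (A1 : Rabs (u x - u (ofT n t)) < eps / 2).
  { apply Hq; auto. intros i Hi. specialize (Hxz i Hi). lra. }
  assert (A2 : Rabs (u y - u (ofT n t)) < eps / 2).
  { apply Hq; auto. intros i Hi. specialize (Hxz i Hi). specialize (Hxy i Hi).
    replace (y i - ofT n t i) with ((y i - x i) + (x i - ofT n t i)) by ring.
    generalize (Rabs_triang (y i - x i) (x i - ofT n t i)). lra. }
  replace (u y - u x) with ((u y - u (ofT n t)) + - (u x - u (ofT n t))) by ring.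
  assert (T := Rabs_triang (u y - u (ofT n t)) (- (u x - u (ofT n t)))).
  rewrite (Rabs_Ropp (u x - u (ofT n t))) in T. lra.
Qed.


Lemma exp_le_mono x y : x <= y -> exp x <= exp y.
Proof. intros [H|H]; [left; apply exp_increasing; auto| subst; lra]. Qed.

Lemma ln_nonpos s : 0 < s -> s <= 1 -> ln s <= 0.
Proof. intros H1 [H2|H2]. - rewrite <- ln_1. left. apply ln_increasing; lra. - subst; rewrite ln_1; lra. Qed.

Lemma rpow_nonneg r a : 0 <= rpow r a.
Proof. unfold rpow. destruct Req_EM_T; [destruct Req_EM_T; lra|]. unfold Rpower. left; apply exp_pos. Qed.

Lemma Rpower_sq_le s a : 0 < s -> s <= 1 -> a <= 2 -> s ^ 2 <= Rpower s a.
Proof. intros H1 H2 H3. rewrite <- Rpower_pow by auto. unfold Rpower. apply exp_le_mono.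
  simpl INR. assert (ln s <= 0) by (apply ln_nonpos; auto). nra. Qed.

Lemma rpow_ge_sq r a t : Rabs t <= r -> Rabs t <= 1 -> 0 <= a <= 2 -> t ^ 2 <= rpow r a.
Proof. intros H1 H2 H3. destruct (Req_dec t 0) as [E|E].
  - subst. replace (0 ^ 2) with 0 by ring. apply rpow_nonneg.
  - assert (Ht : 0 < Rabs t) by (apply Rabs_pos_lt; auto).
    unfold rpow. destruct (Req_EM_T r 0); [lra|].
    rewrite <- pow2_abs. apply Rle_trans with (Rpower (Rabs t) a).
    + apply Rpower_sq_le; lra.
    + destruct (Req_dec a 0) as [Ea|Ea].
      * subst. rewrite !Rpower_O; lra.
      * apply Rle_Rpower_l; lra.
Qed.

Lemma rpow_ge_k r b : 1/4 <= r -> 0 <= b -> Rpower (1/4) b <= rpow r b.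
Proof. intros H1 H2. unfold rpow. destruct (Req_EM_T r 0); [lra|]. apply Rle_Rpower_l; lra. Qed.

Lemma sumN_ge_first n f : (1 <= n)%nat -> (forall i, (i < n)%nat -> 0 <= f i) -> f O <= sumN n f.
Proof. induction n; intros H1 H2; [lia|]. simpl. destruct n.
  - simpl. lra.
  - assert (f O <= sumN (S n) f) by (apply IHn; [lia| intros; apply H2; lia]).
    assert (0 <= f (S n)) by (apply H2; lia). lra. Qed.

Lemma normn_ge0 n x : (1 <= n)%nat -> Rabs (x O) <= normn n x.
Proof. intros H. unfold normn. rewrite <- (sqrt_pow2 (Rabs (x O))) by apply Rabs_pos.
  apply sqrt_le_1_alt. rewrite pow2_abs. apply (sumN_ge_first n (fun i => x i ^ 2)); auto. intros; apply pow2_ge_0. Qed.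

Lemma sumN_lt n f g : (1 <= n)%nat -> (forall i, (i < n)%nat -> f i < g i) -> sumN n f < sumN n g.
Proof. induction n; intros H1 H2; [lia|]. simpl. destruct n.
  - simpl. specialize (H2 O ltac:(lia)). lra.
  - assert (sumN (S n) f < sumN (S n) g) by (apply IHn; [lia| intros; apply H2; lia]).
    specialize (H2 (S n) ltac:(lia)). lra. Qed.

Lemma normn_small n v d : (1 <= n)%nat -> 0 < d -> (forall i, (i < n)%nat -> Rabs (v i) < d / INR n) -> normn n v < d.
Proof. intros Hn Hd H. assert (HN : 1 <= INR n) by (replace 1 with (INR 1) by reflexivity; apply le_INR; auto).
  assert (Hs : sumN n (fun i => v i ^ 2) < sumN n (fun _ => (d / INR n) ^ 2)).
  { apply sumN_lt; auto. intros i Hi. specialize (H i Hi). rewrite <- pow2_abs.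
    assert (0 <= Rabs (v i)) by apply Rabs_pos. nra. }
  rewrite sumN_const in Hs.
  assert (E : INR n * (d / INR n) ^ 2 = d ^ 2 / INR n) by (field; lra).
  assert (d ^ 2 / INR n <= d ^ 2).
  { unfold Rdiv. assert (0 < d ^ 2) by (apply pow_lt; auto).
    assert (/ INR n <= 1). { rewrite <- Rinv_1. apply Rinv_le_contravar; lra. } nra. }
  unfold normn. rewrite <- (sqrt_pow2 d) by lra. apply sqrt_lt_1_alt. split.
  - apply sumN_nonneg. intros; apply pow2_ge_0.
  - lra.
Qed.


Lemma upd_comm x i j a b : i <> j -> upd (upd x i a) j b = upd (upd x j b) i a.
Proof. intros H. apply functional_extensionality. intros k. unfold upd.
  destruct (Nat.eqb_spec k j); destruct (Nat.eqb_spec k i); subst; auto. contradiction. Qed.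

Lemma cube_upd n x i a : cube n x -> (i < n)%nat -> -1 <= a <= 1 -> cube n (upd x i a).
Proof. intros [H1 H2] Hi Ha. split.
  - intros k Hk. unfold upd. destruct (Nat.eqb_spec k i); [lia|]. auto.
  - intros k Hk. unfold upd. destruct (Nat.eqb_spec k i); auto. Qed.

Lemma mid_in N k : (k < N)%nat -> -1 <= mid N k <= 1.
Proof. intros H. destruct (mid_bounds N k H). assert (0 < 1 / INR N) by (apply Rdiv_lt_0_compat; [lra| apply lt_0_INR; lia]). lra. Qed.

Lemma cube_zero n : cube n (fun _ => 0).
Proof. split; [intros i _; auto| intros; lra]. Qed.

Lemma gridsum_S m N g : gridsum (S m) N g = sumN N (fun k => gridsum m N (fun x => g (upd x m (mid N k)))).
Proof. reflexivity. Qed.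

Lemma gridsum_line n N (A B : (nat -> R) -> R) m : (1 <= m <= n)%nat ->
  (forall x, cube n x -> sumN N (fun k => B (upd x O (mid N k))) <= sumN N (fun k => A (upd x O (mid N k)))) ->
  gridsum m N B <= gridsum m N A.
Proof.
  revert A B. induction m; intros A B Hm H; [lia|]. destruct m.
  - simpl. apply H. apply cube_zero.
  - rewrite (gridsum_S (S m) N B), (gridsum_S (S m) N A). apply sumN_le. intros k Hk. apply IHm; [lia|].
    intros x Hx.
    rewrite (sumN_ext N (fun k0 => B (upd (upd x O (mid N k0)) (S m) (mid N k)))
        (fun k0 => B (upd (upd x (S m) (mid N k)) O (mid N k0)))).
    rewrite (sumN_ext N (fun k0 => A (upd (upd x O (mid N k0)) (S m) (mid N k)))
        (fun k0 => A (upd (upd x (S m) (mid N k)) O (mid N k0)))).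
    + apply H. apply cube_upd; auto; [lia| apply mid_in; auto].
    + intros; rewrite upd_comm; auto.
    + intros; rewrite upd_comm; auto.
Qed.

Lemma gridsum_affine m N (g : (nat -> R) -> R) a b :
  gridsum m N (fun x => a * g x + b) = a * gridsum m N g + b * INR N ^ m.
Proof.
  revert g. induction m; intros g; simpl gridsum.
  - simpl. ring.
  - rewrite (sumN_ext N _ (fun k => a * gridsum m N (fun x => g (upd x m (mid N k))) + b * INR N ^ m)).
    + rewrite sumN_plus, sumN_scal, sumN_const. simpl. ring.
    + intros k _. apply (IHm (fun x => g (upd x m (mid N k)))).
Qed.


Definition kapt (k0 t : R) := if Rle_dec (1/4) (Rabs t) then k0 else 0.

Definition Lfun n d1 d2 (psi : (nat -> R) -> R) (Dpsi : (nat -> R) -> nat -> R) :=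
  fun x => rpow (normn n x) (2 * d1) * sumN n (fun i => Dpsi x i ^ 2)
           + (PI / 2) ^ 2 * rpow (normn n x) (2 * d2) * psi x ^ 2.

Lemma upd_upd x i a b : upd (upd x i a) i b = upd x i b.
Proof. apply functional_extensionality; intros k; unfold upd. destruct (Nat.eqb k i); auto. Qed.

Lemma upd_eq x i a : upd x i a i = a.
Proof. unfold upd. rewrite Nat.eqb_refl. auto. Qed.

Lemma pointwise n d1 d2 psi Dpsi y : (1 <= n)%nat -> 0 <= d1 < 1 -> 0 <= d2 -> Rabs (y O) <= 1 ->
  y O ^ 2 * Dpsi y O ^ 2 + (PI / 2) ^ 2 * kapt (Rpower (1/4) (2 * d2)) (y O) * psi y ^ 2 <= Lfun n d1 d2 psi Dpsi y.
Proof.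
  intros Hn Hd1 Hd2 Hy. unfold Lfun. assert (Hno := normn_ge0 n y Hn).
  assert (A1 : y O ^ 2 <= rpow (normn n y) (2 * d1)) by (apply rpow_ge_sq; lra).
  assert (A2 : Dpsi y O ^ 2 <= sumN n (fun i => Dpsi y i ^ 2))
    by (apply (sumN_ge_first n (fun i => Dpsi y i ^ 2)); auto; intros; apply pow2_ge_0).
  assert (A3 : kapt (Rpower (1/4) (2 * d2)) (y O) <= rpow (normn n y) (2 * d2)).
  { unfold kapt. destruct Rle_dec. - apply rpow_ge_k; lra. - apply rpow_nonneg. }
  assert (0 <= y O ^ 2) by apply pow2_ge_0. assert (0 <= Dpsi y O ^ 2) by apply pow2_ge_0.
  assert (0 <= psi y ^ 2) by apply pow2_ge_0. assert (0 <= (PI / 2) ^ 2) by apply pow2_ge_0.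
  assert (0 <= kapt (Rpower (1/4) (2 * d2)) (y O)).
  { unfold kapt. destruct Rle_dec; [left; unfold Rpower; apply exp_pos| lra]. }
  apply Rplus_le_compat.
  - apply Rmult_le_compat; auto.
  - rewrite !Rmult_assoc. apply Rmult_le_compat_l; auto. apply Rmult_le_compat_r; auto.
Qed.

Lemma line_lemma n d1 d2 (psi : (nat -> R) -> R) Dpsi om d m x :
  (1 <= n)%nat -> 0 <= d1 < 1 -> 0 <= d2 ->
  (forall x, in_Rn n x -> forall i, (i < n)%nat ->
      derivable_pt_lim (fun t => psi (upd x i t)) (x i) (Dpsi x i)) ->
  0 <= om ->
  (forall x y, cube n x -> cube n y -> (forall i, (i < n)%nat -> Rabs (y i - x i) < d) ->
      Rabs (Dpsi y O - Dpsi x O) < om) ->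
  (15 <= m)%nat -> 2 / INR (S m) <= d -> cube n x ->
  let Lam := 64 + 8 * / Rpower (1/4) (2 * d2) / (PI / 2) ^ 2 in
  sumN (S m) (fun k => / Lam * psi (upd x O (mid (S m) k)) ^ 2 + - (32 * om ^ 2 / Lam))
  <= sumN (S m) (fun k => Lfun n d1 d2 psi Dpsi (upd x O (mid (S m) k))).
Proof.
  intros Hn Hd1 Hd2 Hder Hom UC Hm Hd Hx Lam.
  set (N := S m). set (t := mid N). set (h := 2 / INR N).
  set (k0 := Rpower (1/4) (2 * d2)). set (c := (PI / 2) ^ 2).
  assert (Hk0 : 0 < k0) by (unfold k0, Rpower; apply exp_pos).
  assert (Hc : 0 < c) by (unfold c; apply pow_lt; generalize PI_RGT_0; lra).
  assert (HLam : 0 < Lam).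
  { unfold Lam. fold k0 c. assert (0 < 8 * / k0 / c).
    { unfold Rdiv. apply Rmult_lt_0_compat; [apply Rmult_lt_0_compat; [lra| apply Rinv_0_lt_compat; auto]| apply Rinv_0_lt_compat; auto]. }
    lra. }
  set (f := fun k => psi (upd x O (t k))). set (g := fun k => Dpsi (upd x O (t k)) O).
  set (kap := fun k => kapt k0 (t k)).
  assert (Hx0 : forall k, (k < N)%nat -> cube n (upd x O (t k))).
  { intros k Hk. apply cube_upd; auto. apply mid_in; auto. }
  assert (HD := disc_ineq m f g kap om (/ k0)).
  assert (HD' : sumN N (fun k => f k ^ 2) <= 64 * sumN N (fun k => t k ^ 2 * g k ^ 2)
     + 8 * / k0 * sumN N (fun k => kap k * f k ^ 2) + 32 * INR N * om ^ 2).
  { apply HD; auto.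
    - left; apply Rinv_0_lt_compat; auto.
    - intros k _. unfold kap, kapt. destruct Rle_dec; lra.
    - intros k _ Hk. unfold kap, kapt. fold N t in Hk. destruct Rle_dec; [|lra]. rewrite Rinv_l; lra.
    - intros k Hk. change (mid (S m)) with t. change (2 / INR (S m)) with h.
      assert (Hts : t (S k) = t k + h) by (unfold t, h; apply mid_S; unfold N; lia).
      assert (Hh : 0 < h) by (unfold h; apply Rdiv_lt_0_compat; [lra| apply lt_0_INR; unfold N; lia]).
      assert (Htk := mid_in N k ltac:(unfold N; lia)). assert (Htk1 := mid_in N (S k) ltac:(unfold N; lia)).
      fold t in Htk, Htk1.
      destruct (MVT_cor2 (fun s => psi (upd x O s)) (fun s => Dpsi (upd x O s) O) (t k) (t (S k)) ltac:(lra))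
        as [xi [Heq Hxi]].
      { intros c1 Hc1. assert (Hin : in_Rn n (upd x O c1)) by (apply cube_upd; [auto| lia| lra]).
        assert (HH := Hder (upd x O c1) Hin O ltac:(lia)). rewrite upd_eq in HH.
        replace (fun t0 => psi (upd (upd x O c1) O t0)) with (fun s => psi (upd x O s)) in HH; auto.
        apply functional_extensionality; intros s; rewrite upd_upd; auto. }
      assert (Hcx : cube n (upd x O xi)) by (apply cube_upd; [auto| lia| lra]).
      change (2 / INR (S m)) with h in Hd. assert (Hd0 : 0 < d) by lra.
      assert (Hclose : forall a b, Rabs (a - b) < d -> forall i, (i < n)%nat -> Rabs (upd x O a i - upd x O b i) < d).
      { intros a b Hab i Hi. unfold upd. destruct (Nat.eqb i O); auto. rewrite Rminus_diag, Rabs_R0; auto. }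
      destruct (Rle_dec (Rabs (t k)) (Rabs (t (S k)))) as [Hle|Hle].
      + exists (Dpsi (upd x O xi) O - g (S k)), (S k). split; [|split; [right; auto| split; [auto| split; [lra|]]]].
        * left. unfold g. apply UC; [apply Hx0; unfold N; lia| auto| apply Hclose; unfold Rabs; destruct Rcase_abs; lra].
        * unfold f. rewrite Heq. ring_simplify. rewrite Hts. ring.
      + exists (Dpsi (upd x O xi) O - g k), k. split; [|split; [left; auto| split; [lra| split; [lra|]]]].
        * left. unfold g. apply UC; [apply Hx0; unfold N; lia| auto| apply Hclose; unfold Rabs; destruct Rcase_abs; lra].
        * unfold f. rewrite Heq. rewrite Hts. ring. }
  apply Rle_trans with (sumN N (fun k => t k ^ 2 * g k ^ 2 + c * (kap k * f k ^ 2))).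
  - rewrite sumN_plus, sumN_scal, sumN_const, sumN_plus, sumN_scal.
    change (sumN N (fun k => psi (upd x O (t k)) ^ 2)) with (sumN N (fun k => f k ^ 2)).
    set (X := sumN N (fun k => f k ^ 2)) in *.
    set (SP := sumN N (fun k => t k ^ 2 * g k ^ 2)) in *.
    set (SQ := sumN N (fun k => kap k * f k ^ 2)) in *.
    assert (HSP : 0 <= SP) by (apply sumN_nonneg; intros; apply Rmult_le_pos; apply pow2_ge_0).
    assert (HSQ : 0 <= SQ).
    { apply sumN_nonneg; intros; apply Rmult_le_pos; [unfold kap, kapt; destruct Rle_dec; lra| apply pow2_ge_0]. }
    assert (E : Lam = 64 + 8 * / k0 / c) by reflexivity.
    assert (Hkc : 0 <= 8 * / k0 / c).
    { unfold Rdiv. left. apply Rmult_lt_0_compat; [apply Rmult_lt_0_compat; [lra| apply Rinv_0_lt_compat; auto]| apply Rinv_0_lt_compat; auto]. }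
    assert (E2 : Lam * (SP + c * SQ) = 64 * SP + 8 * / k0 / c * SP + 64 * c * SQ + 8 * / k0 * SQ)
      by (rewrite E; field; lra).
    assert (0 <= 8 * / k0 / c * SP) by (apply Rmult_le_pos; lra).
    assert (0 <= 64 * c * SQ) by (apply Rmult_le_pos; lra).
    assert (Hmain : X - 32 * INR N * om ^ 2 <= Lam * (SP + c * SQ)) by lra.
    apply Rmult_le_reg_l with Lam; auto.
    replace (Lam * (/ Lam * X + INR N * - (32 * om ^ 2 / Lam))) with (X - 32 * INR N * om ^ 2) by (field; lra).
    lra.
  - apply sumN_le. intros k Hk.
    assert (HH := pointwise n d1 d2 psi Dpsi (upd x O (t k)) Hn Hd1 Hd2).
    rewrite upd_eq in HH. assert (Htk := mid_in N k Hk). fold t in Htk.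
    unfold g, f, kap, c, k0. rewrite <- Rmult_assoc. apply HH. unfold Rabs; destruct Rcase_abs; lra.
Qed.

Theorem lemma3p2 (n : nat) (d1 d2 : R)
  (hn : (1 <= n)%nat) (hd1 : 0 <= d1 < 1) (hd2 : 0 <= d2)
  (hcase : (2 <= n)%nat \/ (n = 1%nat /\ d1 < 1/2)) :
  exists lam : R, 0 < lam /\
    forall (psi : (nat -> R) -> R) (Dpsi : (nat -> R) -> nat -> R),
      C1c n psi Dpsi ->
      forall IL IR : R,
        cube_int n (fun x => rpow (normn n x) (2 * d1) * sumN n (fun i => Dpsi x i ^ 2)
                             + (PI / 2) ^ 2 * rpow (normn n x) (2 * d2) * psi x ^ 2) IL ->
        cube_int n (fun x => psi x ^ 2) IR ->
        IL >= lam * IR.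
Proof.
  set (Lam := 64 + 8 * / Rpower (1/4) (2 * d2) / (PI / 2) ^ 2).
  assert (HLam : 0 < Lam).
  { unfold Lam. assert (0 < Rpower (1/4) (2 * d2)) by (unfold Rpower; apply exp_pos).
    assert (0 < (PI / 2) ^ 2) by (apply pow_lt; generalize PI_RGT_0; lra).
    assert (0 < 8 * / Rpower (1/4) (2 * d2) / (PI / 2) ^ 2).
    { unfold Rdiv. apply Rmult_lt_0_compat; [apply Rmult_lt_0_compat; [lra| apply Rinv_0_lt_compat; auto]| apply Rinv_0_lt_compat; auto]. }
    lra. }
  exists (/ Lam). split; [apply Rinv_0_lt_compat; auto|].
  intros psi Dpsi [Hder [Hcont _]] IL IR HL HR.
  change (cube_int n (Lfun n d1 d2 psi Dpsi) IL) in HL.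
  assert (HN : 1 <= INR n) by (replace 1 with (INR 1) by reflexivity; apply le_INR; auto).
  assert (UCall := heine n (fun y => Dpsi y O)).
  assert (Happrox : forall om, 0 < om -> exists N0, forall N, (N0 <= N)%nat ->
     (2 / INR (S N)) ^ n * gridsum n (S N) (Lfun n d1 d2 psi Dpsi) >=
     / Lam * ((2 / INR (S N)) ^ n * gridsum n (S N) (fun x => psi x ^ 2)) - 2 ^ n * (32 * om ^ 2 / Lam)).
  { intros om Hom. destruct (UCall) with (eps := om) as [d [Hd UC]]; auto.
    { intros z Hz eps Heps. destruct (Hcont z (proj1 Hz) O ltac:(lia) eps Heps) as [d0 [Hd0 Hd0']].
      exists (d0 / INR n). split; [apply Rdiv_lt_0_compat; lra|]. intros y Hy Hyz.
      apply Hd0'; [apply Hy|]. apply normn_small; auto. }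
    destruct (INR_unbounded (2 / d)) as [N1 HN1].
    exists (Nat.max 15 N1). intros N HNN.
    assert (HSN : 0 < INR (S N)) by (apply lt_0_INR; lia).
    assert (Hdd : 2 / INR (S N) <= d).
    { assert (INR N1 <= INR (S N)) by (apply le_INR; lia).
      apply Rmult_le_reg_r with (INR (S N)); auto. unfold Rdiv. rewrite Rmult_assoc, Rinv_l by lra.
      assert (2 / d * d = 2) by (field; lra). nra. }
    assert (Hline : gridsum n (S N) (fun y => / Lam * psi y ^ 2 + - (32 * om ^ 2 / Lam)) <=
                    gridsum n (S N) (Lfun n d1 d2 psi Dpsi)).
    { apply (gridsum_line n (S N) _ _ n); [lia|]. intros x Hx.
      exact (line_lemma n d1 d2 psi Dpsi om d N x hn hd1 hd2 Hder (Rlt_le _ _ Hom) UC ltac:(lia) Hdd Hx). }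
    rewrite (gridsum_affine n (S N) (fun y => psi y ^ 2) (/ Lam) (- (32 * om ^ 2 / Lam))) in Hline.
    assert (Hp : 0 <= (2 / INR (S N)) ^ n) by (apply pow_le; apply Rlt_le, Rdiv_lt_0_compat; lra).
    assert (Hm := Rmult_le_compat_l _ _ _ Hp Hline).
    assert (E : (2 / INR (S N)) ^ n * INR (S N) ^ n = 2 ^ n).
    { rewrite <- Rpow_mult_distr. f_equal. field. lra. }
    apply Rle_ge. eapply Rle_trans; [|exact Hm].
    rewrite Rmult_plus_distr_l. rewrite <- E. right. ring. }
  apply Rnot_lt_ge. intros Hlt.
  set (del := / Lam * IR - IL). assert (Hdel : 0 < del) by (unfold del; lra).
  set (C := 2 ^ n * 32 / Lam). assert (HC : 0 < C).
  { unfold C. unfold Rdiv. apply Rmult_lt_0_compat; [apply Rmult_lt_0_compat; [apply pow_lt; lra| lra]| apply Rinv_0_lt_compat; auto]. }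
  set (om := Rmin 1 (del / (4 * C))).
  assert (Hom0 : 0 < om) by (unfold om; apply Rmin_glb_lt; [lra| apply Rdiv_lt_0_compat; lra]).
  assert (Hom1 : om <= 1) by (unfold om; apply Rmin_l).
  assert (Hom2 : om <= del / (4 * C)) by (unfold om; apply Rmin_r).
  assert (Hsq : C * om ^ 2 <= del / 4).
  { assert (om ^ 2 <= om) by (simpl; nra). assert (C * om <= del / 4).
    { apply Rmult_le_compat_l with (r := C) in Hom2; [|lra]. replace (C * (del / (4 * C))) with (del / 4) in Hom2 by (field; lra). lra. }
    nra. }
  set (eps := del / (4 * (1 + / Lam))).
  assert (Hil : 0 < / Lam) by (apply Rinv_0_lt_compat; auto).
  assert (Heps : 0 < eps) by (unfold eps; apply Rdiv_lt_0_compat; lra).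
  assert (Heps2 : (1 + / Lam) * eps = del / 4) by (unfold eps; field; lra).
  destruct (Happrox om Hom0) as [N0 HN0].
  destruct (HL eps Heps) as [N1 HN1]. destruct (HR eps Heps) as [N2 HN2].
  set (N := Nat.max N0 (Nat.max N1 N2)).
  specialize (HN0 N ltac:(unfold N; lia)). specialize (HN1 N ltac:(unfold N; lia)).
  specialize (HN2 N ltac:(unfold N; lia)). unfold R_dist in HN1, HN2.
  set (SL := (2 / INR (S N)) ^ n * gridsum n (S N) (Lfun n d1 d2 psi Dpsi)) in *.
  set (SR := (2 / INR (S N)) ^ n * gridsum n (S N) (fun x => psi x ^ 2)) in *.
  assert (A1 : SL - IL < eps) by (unfold Rabs in HN1; destruct Rcase_abs in HN1; lra).
  assert (A2 : IR - SR < eps) by (unfold Rabs in HN2; destruct Rcase_abs in HN2; lra).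
  assert (A3 : / Lam * (IR - eps) <= / Lam * SR) by (apply Rmult_le_compat_l; lra).
  assert (E3 : 2 ^ n * (32 * om ^ 2 / Lam) = C * om ^ 2) by (unfold C; field; lra).
  rewrite E3 in HN0.
  unfold del in *. nra.
Qed.
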